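(* Let $\alpha>0$. The general solution on $z>-1$ of the linear ODE $$(1+z)^2\frac{d^2\delta}{dz^2}+\frac12(1+z)\frac{\alpha(1+z)^3-2}{\alpha(1+z)^3+1}\frac{d\delta}{dz}-\frac12\frac{3\alpha(1+z)^3}{\alpha(1+z)^3+1}\,\delta=0$$ is $$\delta(z)=\kappa_1\sqrt{1+\alpha(1+z)^3}+\kappa_2\frac{1}{1+z}\,{}_2F_1\!\Big(1,\tfrac13;\tfrac{11}{6};-\frac{1}{\alpha(1+z)^3}\Big),\qquad \kappa_1,\kappa_2\in\mathbb R.$$
   Context: ${}_2F_1(a,b;c;x)$ denotes the Gauss hypergeometric function (the argument $-1/(\alpha(1+z)^3)$ may lie outside the unit disk, in which case ${}_2F_1$ means its analytic continuation to $\mathbb C\setminus[1,\infty)$). This ODE is the linearized density-contrast equation for a flat universe with dust and cosmological constant, $\alpha=\Omega_m/\Omega_\Lambda$. *)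

(* Defs.v *)
From Stdlib Require Import Reals Lra ClassicalEpsilon.
From Coquelicot Require Import Coquelicot.
Open Scope R_scope.

Fixpoint poch (a : R) (n : nat) : R :=
  match n with
  | O => 1
  | S m => poch a m * (a + INR m)
  end.

Definition hyp_coef (a b c : R) (n : nat) : R :=
  poch a n * poch b n / (poch c n * INR (Stdlib.Arith.Factorial.fact n)).

(* F is the (real) analytic continuation of the Gauss series 2F1(a,b;c;.)
   to (-oo,1) (= restriction to the real axis of the continuation to
   C \ [1,oo)): it agrees with the series on (-1,1) and is real-analytic
   on (-oo,1). *)
Definition is_2F1_continuation (a b c : R) (F : R -> R) : Prop :=
  (forall x, -1 < x < 1 -> F x = PSeries (hyp_coef a b c) x) /\
  (forall x0, x0 < 1 -> exists r : R, 0 < r /\ exists an : nat -> R,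
       forall y, Rabs (y - x0) < r -> is_pseries an (y - x0) (F y)).

Definition hyp2F1 (a b c : R) : R -> R :=
  epsilon (inhabits (fun _ : R => 0)) (is_2F1_continuation a b c).

Definition is_ode_solution (alpha : R) (delta : R -> R) : Prop :=
  exists d1 d2 : R -> R, forall z, -1 < z ->
    is_derive delta z (d1 z) /\ is_derive d1 z (d2 z) /\
    (1 + z) ^ 2 * d2 z
    + / 2 * (1 + z) * ((alpha * (1 + z) ^ 3 - 2) / (alpha * (1 + z) ^ 3 + 1)) * d1 z
    - / 2 * ((3 * alpha * (1 + z) ^ 3) / (alpha * (1 + z) ^ 3 + 1)) * delta z = 0.

Definition general_sol (alpha k1 k2 : R) (z : R) : R :=
  k1 * sqrt (1 + alpha * (1 + z) ^ 3)
  + k2 * (/ (1 + z)) * hyp2F1 1 (1/3) (11/6) (- / (alpha * (1 + z) ^ 3)).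

(* Main.v *)
Require Import Defs.
From Stdlib Require Import Reals Lra Psatz ClassicalEpsilon Lia.
From Stdlib Require Import Arith.Factorial.
From Coquelicot Require Import Coquelicot.
Open Scope R_scope.


Ltac req := match goal with |- @eq _ ?a ?b => change (@eq R a b) end.

Lemma minusR (a b : R) : minus a b = a - b.
Proof. reflexivity. Qed.

Definition phi (s : R) : R := sqrt (1 - s^3).
Definition psi (s : R) : R := (1 - s^3) * sqrt (1 - s^3).

Lemma psi_der_lt (s : R) : s < 1 -> is_derive psi s (-(9/2) * s^2 * phi s).
Proof.
  intros Hs.
  assert (H3 : 0 < 1 - s^3).
  { assert (s^3 < 1).
    { destruct (Rle_or_lt 0 s).
      - assert (s^3 <= s^2 * 1 * s) by nra. nra.
      - nra. }
    lra. }
  unfold psi, phi. auto_derive.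
  { replace (1 + - (s * (s * (s * 1)))) with (1 - s^3) by ring. lra. }
  replace (1 + - (s * (s * (s * 1)))) with (1 - s^3) by ring.
  assert (Hq := sqrt_sqrt (1 - s^3) (Rlt_le _ _ H3)).
  assert (Hp := sqrt_lt_R0 _ H3).
  set (S := sqrt (1 - s^3)) in *.
  apply Rmult_eq_reg_r with S; [|lra].
  field_simplify; [|lra].
  replace (S^2) with (S*S) by ring. rewrite Hq. field.
Qed.

Lemma sqrt_small (A e : R) : 0 < e -> A < e^2 -> sqrt A < e.
Proof.
  intros He HA. destruct (Rle_or_lt A 0).
  - rewrite sqrt_neg_0; auto.
  - rewrite <- (sqrt_pow2 e) by lra. apply sqrt_lt_1_alt. lra.
Qed.

Lemma psi_der_1 : is_derive psi 1 (-(9/2) * 1^2 * phi 1).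
Proof.
  apply is_derive_Reals. unfold phi.
  replace (1 - 1^3) with 0 by ring. rewrite sqrt_0. rewrite Rmult_0_r.
  intros eps He.
  assert (Hd : 0 < Rmin 1 ((eps/7)^2/7)).
  { apply Rmin_glb_lt. lra. apply Rdiv_lt_0_compat; [|lra]. apply pow_lt. lra. }
  exists (mkposreal _ Hd). intros h Hh0 Hh. simpl in Hh.
  assert (Hh1 : Rabs h < 1) by (eapply Rlt_le_trans; [apply Hh| apply Rmin_l]).
  assert (Hh2 : Rabs h < (eps/7)^2/7) by (eapply Rlt_le_trans; [apply Hh| apply Rmin_r]).
  unfold psi. replace (1 - 1^3) with 0 by ring. rewrite Rmult_0_l, Rminus_0_r, Rminus_0_r.
  replace ((1 - (1 + h) ^ 3) * sqrt (1 - (1 + h) ^ 3) / h)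
    with (-(3 + 3*h + h^2) * sqrt (1 - (1 + h) ^ 3)) by (field; auto).
  assert (Hs0 := sqrt_pos (1 - (1 + h) ^ 3)).
  assert (Hs : sqrt (1 - (1 + h) ^ 3) < eps / 7).
  { apply sqrt_small. lra.
    apply Rabs_def2 in Hh1. destruct Hh1.
    assert (Rabs h * 7 < (eps/7)^2) by lra.
    destruct (Rle_or_lt 0 h).
    - rewrite Rabs_right in H1 by lra. nra.
    - rewrite Rabs_left in H1 by lra. nra. }
  apply Rabs_def2 in Hh1. destruct Hh1.
  rewrite Rabs_mult. rewrite (Rabs_right (sqrt _)) by lra.
  assert (Rabs (-(3 + 3*h + h^2)) <= 7).
  { apply Rabs_le. split; nra. }
  assert (0 <= Rabs (-(3 + 3*h + h^2))) by apply Rabs_pos.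
  nra.
Qed.

Lemma psi_der (s : R) : s <= 1 -> is_derive psi s (-(9/2) * s^2 * phi s).
Proof.
  intros Hs. destruct (Rle_lt_or_eq_dec _ _ Hs).
  - now apply psi_der_lt.
  - subst. apply psi_der_1.
Qed.

Lemma phi_cont (s : R) : continuous phi s.
Proof.
  unfold phi. apply continuous_sqrt_comp.
  apply (@ex_derive_continuous R_AbsRing R_NormedModule). auto_derive. auto.
Qed.

Lemma cont_mult (f g : R -> R) x :
  continuous f x -> continuous g x -> continuous (fun y => f y * g y) x.
Proof. intros. apply (continuous_mult f g x); auto. Qed.
Lemma cont_plus (f g : R -> R) x :
  continuous f x -> continuous g x -> continuous (fun y => f y + g y) x.
Proof. intros. apply (continuous_plus f g x); auto. Qed.
Lemma cont_minus (f g : R -> R) x :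
  continuous f x -> continuous g x -> continuous (fun y => f y - g y) x.
Proof. intros. apply (continuous_minus f g x); auto. Qed.
Lemma cont_der (f : R -> R) x : ex_derive f x -> continuous f x.
Proof. apply (@ex_derive_continuous R_AbsRing R_NormedModule). Qed.

Lemma RInt_lin (f g : R -> R) (a b A B : R) (If Ig : R) :
  is_RInt f a b If -> is_RInt g a b Ig ->
  is_RInt (fun y => A * f y - B * g y) a b (A * If - B * Ig).
Proof.
  intros Hf Hg.
  apply (is_RInt_minus (fun y => A * f y) (fun y => B * g y)).
  - apply (is_RInt_scal f a b A If Hf).
  - apply (is_RInt_scal g a b B Ig Hg).
Qed.

Lemma ibp (P P' : R -> R) :
  (forall s, 0 <= s <= 1 -> is_derive P s (P' s)) ->
  (forall s, 0 <= s <= 1 -> continuous P' s) ->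
  is_RInt (fun s => (P' s * (1 - s^3) - 9/2 * s^2 * P s) * phi s) 0 1 (- P 0).
Proof.
  intros HP HP'.
  assert (Hm : Rmin 0 1 = 0) by (apply Rmin_left; lra).
  assert (HM : Rmax 0 1 = 1) by (apply Rmax_right; lra).
  assert (H := is_RInt_derive (fun s => P s * psi s)
     (fun s => P' s * psi s + P s * (-(9/2) * s^2 * phi s)) 0 1).
  rewrite Hm, HM in H.
  replace (- P 0) with (minus (P 1 * psi 1) (P 0 * psi 0)).
  2:{ assert (E1 : psi 1 = 0) by (unfold psi; ring).
      assert (E0 : psi 0 = 1).
      { unfold psi. replace (1 - 0^3) with 1 by ring. rewrite sqrt_1. ring. }
      rewrite E1, E0. unfold minus, plus, opp; simpl. ring. }
  eapply (is_RInt_ext (V := R_NormedModule)); [|apply H].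
  - intros x _. unfold psi, phi. req. ring.
  - intros x Hx. apply (is_derive_mult P psi x (P' x)).
    + now apply HP.
    + apply psi_der. lra.
    + intros; apply Rmult_comm.
  - intros x Hx. apply cont_plus; apply cont_mult.
    + now apply HP'.
    + unfold psi. apply cont_mult. apply cont_der. auto_derive. auto. apply phi_cont.
    + apply cont_der. eexists. now apply HP.
    + apply cont_mult. apply cont_der. auto_derive. auto. apply phi_cont.
Qed.

Lemma is_derive_eq (f : R -> R) x l l' : is_derive f x l -> l = l' -> is_derive f x l'.
Proof. intros H <-; exact H. Qed.

Lemma exRI (R0 : R -> R) :
  (forall s, 0 <= s <= 1 -> ex_derive R0 s) -> ex_RInt (fun s => R0 s * phi s) 0 1.
Proof.
  intros H. apply (ex_RInt_continuous (V:=R_CompleteNormedModule)).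
  rewrite Rmin_left, Rmax_right by lra.
  intros z Hz. apply cont_mult. apply cont_der. now apply H. apply phi_cont.
Qed.

Definition mom (n : nat) : R := RInt (fun s => s^(3*n) * phi s) 0 1.

Lemma mom_correct n : is_RInt (fun s => s^(3*n) * phi s) 0 1 (mom n).
Proof.
  apply (RInt_correct (V:=R_CompleteNormedModule)). apply exRI.
  intros. auto_derive. auto.
Qed.

Lemma is_RInt_uniq (f g : R -> R) a b l1 l2 :
  (forall x, Rmin a b < x < Rmax a b -> f x = g x) ->
  is_RInt f a b l1 -> is_RInt g a b l2 -> l1 = l2.
Proof.
  intros He H1 H2.
  apply (is_RInt_ext (V:=R_NormedModule) f g) in H1; auto.
  apply (is_RInt_unique (V:=R_CompleteNormedModule)) in H1.
  apply (is_RInt_unique (V:=R_CompleteNormedModule)) in H2. congruence.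
Qed.

Lemma mom_rec n : (INR (3*n+1) + 9/2) * mom (S n) = INR (3*n+1) * mom n.
Proof.
  assert (H1 := ibp (fun s => s^(3*n+1)) (fun s => INR (3*n+1) * s^(3*n))).
  assert (H2 := RInt_lin _ _ 0 1 (INR (3*n+1)) (INR (3*n+1) + 9/2) _ _
                  (mom_correct n) (mom_correct (S n))).
  assert (E : INR (3 * n + 1) * mom n - (INR (3 * n + 1) + 9 / 2) * mom (S n) = - 0^(3*n+1)).
  { eapply is_RInt_uniq; [|apply H2|apply H1].
    - intros x _. replace (3 * S n)%nat with (3*n + 3)%nat by lia.
      rewrite pow_add. replace (3*n+1)%nat with (S (3*n)) by lia. req. simpl. ring.
    - intros s Hs. apply (is_derive_eq _ _ _ _ (is_derive_pow (fun s => s) (3*n+1) s 1 (is_derive_id s))).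
      replace (Init.Nat.pred (3*n+1)) with (3*n)%nat by lia. req. ring.
    - intros s Hs. apply cont_der. auto_derive. auto. }
  rewrite pow_i in E by lia. lra.
Qed.

Lemma mom0_pos : 0 < mom 0.
Proof.
  assert (H : is_RInt (fun s => 1 - s^3) 0 1 (3/4)).
  { assert (H' := is_RInt_derive (V:=R_CompleteNormedModule) (fun s => s - s^4/4) (fun s => 1 - s^3) 0 1).
    rewrite Rmin_left, Rmax_right in H' by lra.
    replace (3/4) with (minus (1 - 1^4/4) (0 - 0^4/4)).
    2:{ rewrite minusR. req. field. }
    apply H'.
    - intros. auto_derive. auto. req. field.
    - intros. apply cont_der. auto_derive. auto. }
  apply (is_RInt_unique (V:=R_CompleteNormedModule)) in H.
  assert (3/4 <= mom 0).
  { rewrite <- H. unfold mom. apply RInt_le. lra.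
    - apply (ex_RInt_continuous (V:=R_CompleteNormedModule)). intros.
      apply cont_der. auto_derive. auto.
    - apply exRI. intros. auto_derive. auto.
    - intros x Hx. simpl. rewrite Rmult_1_l. unfold phi.
      assert (0 <= 1 - x^3 <= 1).
      { assert (0 <= x^3) by (apply pow_le; lra).
        assert (x^3 <= 1). { replace 1 with (1^3) by ring. apply pow_incr. lra. } lra. }
      assert (Hs := sqrt_sqrt (1 - x^3) (proj1 H0)).
      assert (0 <= sqrt (1 - x^3)) by apply sqrt_pos.
      assert (sqrt (1 - x^3) <= 1).
      { apply Rle_trans with (sqrt 1); [apply sqrt_le_1_alt; lra | rewrite sqrt_1; lra]. }
      nra. }
  lra.
Qed.

Lemma poch_pos c n : 0 < c -> 0 < poch c n.
Proof.
  intros Hc. induction n; simpl. lra. apply Rmult_lt_0_compat; auto.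
  assert (0 <= INR n) by apply pos_INR. lra.
Qed.

Lemma poch1 n : poch 1 n = INR (fact n).
Proof.
  induction n. simpl; reflexivity.
  cbn [poch]. rewrite IHn. replace (fact (S n)) with (S n * fact n)%nat by reflexivity.
  rewrite mult_INR, S_INR. ring.
Qed.

Lemma hyp_coef_mom n : hyp_coef 1 (1/3) (11/6) n = mom n / mom 0.
Proof.
  assert (H0 := mom0_pos).
  unfold hyp_coef. rewrite poch1.
  assert (INR (fact n) <> 0) by (apply not_0_INR; apply fact_neq_0).
  assert (Hp := poch_pos (11/6) n ltac:(lra)).
  replace (INR (fact n) * poch (1 / 3) n / (poch (11 / 6) n * INR (fact n)))
    with (poch (1/3) n / poch (11/6) n) by (field; lra).
  induction n.
  - simpl. field. lra.
  - assert (Hp' := poch_pos (11/6) n ltac:(lra)).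
    assert (INR (fact n) <> 0) by (apply not_0_INR; apply fact_neq_0).
    specialize (IHn H1 Hp').
    assert (R := mom_rec n). rewrite plus_INR, mult_INR in R.
    replace (INR 3) with 3 in R by (simpl; ring). replace (INR 1) with 1 in R by reflexivity.
    simpl. assert (0 <= INR n) by apply pos_INR.
    replace (poch (1 / 3) n * (1 / 3 + INR n) / (poch (11 / 6) n * (11 / 6 + INR n)))
      with (poch (1 / 3) n / poch (11 / 6) n * ((1 / 3 + INR n) / (11 / 6 + INR n))) by (field; lra).
    rewrite IHn.
    replace (mom (S n)) with (mom n * ((3*INR n + 1) / (3 * INR n + 1 + 9/2))).
    + field. lra.
    + apply Rmult_eq_reg_l with (3 * INR n + 1 + 9/2). 2: lra.
      rewrite R. field. lra.
Qed.


Definition Iint (x : R) : R := RInt (fun s => / (1 - x * s^3) * phi s) 0 1.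
Definition cc (x0 : R) (k : nat) : R :=
  RInt (fun s => s^(3*k) / (1 - x0 * s^3)^(S k) * phi s) 0 1.

Lemma phi_bound s : 0 <= s <= 1 -> 0 <= phi s <= 1.
Proof.
  intros Hs. unfold phi. split. apply sqrt_pos.
  assert (0 <= s^3) by (apply pow_le; lra).
  apply Rle_trans with (sqrt 1); [apply sqrt_le_1_alt; lra | rewrite sqrt_1; lra].
Qed.

Lemma s3_bound s : 0 <= s <= 1 -> 0 <= s^3 <= 1.
Proof.
  intros Hs. split. apply pow_le; lra.
  replace 1 with (1^3) by ring. apply pow_incr. lra.
Qed.

Section Expand.
Variables (x0 h q mu : R).
Hypothesis Hq : 0 <= q < 1.
Hypothesis Hmu : 0 < mu.
Hypothesis HD : forall s, 0 <= s <= 1 -> mu <= 1 - x0 * s^3.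
Hypothesis Hh : forall s, 0 <= s <= 1 -> Rabs h * s^3 <= q * (1 - x0 * s^3).

Let D s := 1 - x0 * s^3.

Definition TT (N : nat) (s : R) : R :=
  (1 - (h * s^3 / (1 - x0 * s^3))^(S N)) / (1 - x0 * s^3 - h * s^3).

Lemma Dh_pos s : 0 <= s <= 1 -> (1 - q) * mu <= 1 - x0 * s^3 - h * s^3.
Proof.
  intros Hs. specialize (HD s Hs). specialize (Hh s Hs).
  assert (H3 := s3_bound s Hs).
  assert (h * s^3 <= Rabs h * s^3).
  { apply Rmult_le_compat_r. lra. apply Rle_abs. }
  nra.
Qed.

Lemma TT_ex N : ex_RInt (fun s => TT N s * phi s) 0 1.
Proof.
  apply exRI. intros s Hs. unfold TT.
  assert (H1 := HD s Hs). assert (H2 := Dh_pos s Hs).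
  assert (0 < (1 - q) * mu) by (apply Rmult_lt_0_compat; lra).
  auto_derive. repeat split.
  - replace (1 + - (x0 * (s * (s * (s * 1))))) with (1 - x0 * s^3) by (simpl; ring). lra.
  - replace (1 + - (x0 * (s * (s * (s * 1)))) + - (h * (s * (s * (s * 1)))))
      with (1 - x0 * s^3 - h*s^3) by (simpl; ring). lra.
Qed.

Lemma cc_ex k : ex_RInt (fun s => s^(3*k) / (1 - x0 * s^3)^(S k) * phi s) 0 1.
Proof.
  apply exRI. intros s Hs. assert (H1 := HD s Hs).
  auto_derive. intro E. apply (pow_nonzero (1 - x0*s^3) (S k)); [lra|].
  rewrite <- E. reflexivity.
Qed.

Lemma TT_step N s : 0 <= s <= 1 ->
  TT (S N) s = TT N s + h^(S N) * (s^(3 * S N) / (1 - x0 * s^3)^(S (S N))).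
Proof.
  intros Hs. assert (H1 := HD s Hs). assert (H2 := Dh_pos s Hs).
  assert (0 < (1 - q) * mu) by (apply Rmult_lt_0_compat; lra).
  unfold TT.
  set (Dd := 1 - x0 * s^3) in *.
  assert (E1 : (h * s^3 / Dd)^(S (S N)) = (h * s^3 / Dd) * (h * s^3 / Dd)^(S N)) by reflexivity.
  assert (E2 : h^(S N) * (s^(3 * S N) / Dd^(S (S N))) = (h * s^3)^(S N) / (Dd * Dd^(S N))).
  { rewrite pow_mult, Rpow_mult_distr. change (Dd^(S (S N))) with (Dd * Dd^(S N)). unfold Rdiv. ring. }
  assert (E3 : (h * s^3 / Dd)^(S N) = (h * s^3)^(S N) / Dd^(S N)).
  { unfold Rdiv. rewrite Rpow_mult_distr, pow_inv. reflexivity. }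
  rewrite E1, E2, E3.
  assert (HB := pow_nonzero Dd (S N) ltac:(lra)).
  set (A := (h * s^3)^(S N)). set (B := Dd^(S N)).
  field. split; [exact HB|split; lra].
Qed.

Lemma partial_sums N :
  sum_n (fun k => scal (pow_n h k) (cc x0 k)) N = RInt (fun s => TT N s * phi s) 0 1.
Proof.
  induction N.
  - rewrite sum_O. rewrite pow_n_pow. unfold cc. simpl pow. rewrite Rmult_1_l.
    apply RInt_ext. rewrite Rmin_left, Rmax_right by lra. intros s Hs.
    assert (Hs' : 0 <= s <= 1) by lra.
    assert (H1 := HD s Hs'). assert (H2 := Dh_pos s Hs').
    assert (0 < (1 - q) * mu) by (apply Rmult_lt_0_compat; lra).
    unfold TT. simpl pow. req. field. split; lra.
  - rewrite sum_Sn, IHN. rewrite pow_n_pow.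
    change (plus ?a ?b) with (a + b). change (scal ?a ?b) with (a * b).
    unfold cc.
    rewrite <- (RInt_scal (V:=R_CompleteNormedModule)) by apply cc_ex.
    rewrite <- (RInt_plus (V:=R_CompleteNormedModule)).
    + apply RInt_ext. rewrite Rmin_left, Rmax_right by lra. intros s Hs.
      rewrite TT_step by lra. change (scal ?a ?b) with (a * b). change (plus ?a ?b) with (a + b).
      req. ring.
    + apply TT_ex.
    + apply (ex_RInt_scal (V:=R_CompleteNormedModule)). apply cc_ex.
Qed.

Lemma rem_bound N :
  Rabs (Iint (x0 + h) - RInt (fun s => TT N s * phi s) 0 1) <= q^(S N) / ((1 - q) * mu).
Proof.
  assert (0 < (1 - q) * mu) by (apply Rmult_lt_0_compat; lra).
  unfold Iint. rewrite <- (RInt_minus (V:=R_CompleteNormedModule)).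
  2:{ apply exRI. intros s Hs. assert (H2 := Dh_pos s Hs). auto_derive.
      replace (1 + - ((x0 + h) * (s * (s * (s * 1))))) with (1 - x0 * s^3 - h * s^3) by (simpl; ring).
      lra. }
  2:{ apply TT_ex. }
  replace (q ^ S N / ((1 - q) * mu)) with ((1 - 0) * (q ^ S N / ((1 - q) * mu))) by ring.
  apply abs_RInt_le_const. lra.
  - apply (ex_RInt_minus (V:=R_CompleteNormedModule)).
    + apply exRI. intros s Hs. assert (H2 := Dh_pos s Hs). auto_derive.
      replace (1 + - ((x0 + h) * (s * (s * (s * 1))))) with (1 - x0 * s^3 - h * s^3) by (simpl; ring).
      lra.
    + apply TT_ex.
  - intros s Hs. change (minus ?a ?b) with (a - b).
    assert (H1 := HD s Hs). assert (H2 := Dh_pos s Hs). assert (H3 := Hh s Hs).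
    assert (Hp := phi_bound s Hs).
    assert (E : / (1 - (x0 + h) * s ^ 3) * phi s - TT N s * phi s
              = (h * s ^ 3 / (1 - x0 * s ^ 3)) ^ S N / (1 - x0 * s^3 - h * s^3) * phi s).
    { unfold TT. field. lra. }
    rewrite E. clear E.
    assert (Hr : Rabs (h * s ^ 3 / (1 - x0 * s ^ 3)) <= q).
    { rewrite Rabs_div by lra. rewrite Rabs_mult. rewrite (Rabs_right (s^3)) by (apply Rle_ge, s3_bound; auto).
      rewrite (Rabs_right (1 - x0 * s^3)) by lra.
      apply Rmult_le_reg_r with (1 - x0 * s^3). lra. unfold Rdiv. rewrite Rmult_assoc, Rinv_l by lra. lra. }
    rewrite Rabs_mult, Rabs_div by lra. rewrite <- RPow_abs.
    rewrite (Rabs_right (1 - x0 * s ^ 3 - h * s ^ 3)) by lra.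
    rewrite (Rabs_right (phi s)) by lra.
    assert (Hqn : Rabs (h * s ^ 3 / (1 - x0 * s ^ 3)) ^ S N <= q ^ S N).
    { apply pow_incr. split. apply Rabs_pos. auto. }
    assert (0 <= Rabs (h * s ^ 3 / (1 - x0 * s ^ 3)) ^ S N) by (apply pow_le, Rabs_pos).
    apply Rle_trans with (q ^ S N / ((1 - q) * mu) * 1); [|lra].
    apply Rmult_le_compat; try lra.
    + apply Rmult_le_pos; auto. left; apply Rinv_0_lt_compat; lra.
    + unfold Rdiv. apply Rmult_le_compat; auto. left; apply Rinv_0_lt_compat; lra.
      apply Rinv_le_contravar; lra.
Qed.

Lemma expand : is_pseries (cc x0) h (Iint (x0 + h)).
Proof.
  assert (0 < (1 - q) * mu) by (apply Rmult_lt_0_compat; lra).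
  set (K := / ((1 - q) * mu)).
  assert (HK : 0 < K) by (apply Rinv_0_lt_compat; lra).
  assert (Hl : is_lim_seq (fun N => sum_n (fun k => scal (pow_n h k) (cc x0 k)) N) (Iint (x0 + h))).
  { apply is_lim_seq_ext with
      (fun N => Iint (x0 + h) - (Iint (x0 + h) - RInt (fun s => TT N s * phi s) 0 1)).
    { intros N. rewrite partial_sums. ring. }
    replace (Finite (Iint (x0 + h))) with (Finite (Iint (x0 + h) - 0)) by (f_equal; ring).
    apply is_lim_seq_minus'. apply is_lim_seq_const.
    apply is_lim_seq_le_le with (fun N => - (K * q * q^N)) (fun N => K * q * q^N).
    - intros N. assert (B := rem_bound N). apply Rabs_le_between in B.
      simpl pow in B. unfold K. unfold Rdiv in B. split; lra.
    - replace (Finite 0) with (Rbar_opp (Rbar_mult (K * q) 0)) by (simpl; f_equal; ring).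
      apply (is_lim_seq_opp (fun N => K * q * q^N)).
      apply is_lim_seq_scal_l. apply is_lim_seq_geom. rewrite Rabs_right; lra.
    - replace (Finite 0) with (Rbar_mult (K * q) 0) by (simpl; f_equal; ring).
      apply is_lim_seq_scal_l. apply is_lim_seq_geom. rewrite Rabs_right; lra. }
  exact Hl.
Qed.

End Expand.


Lemma lim0_bounded (u : nat -> R) : is_lim_seq u 0 -> exists M, forall n, Rabs (u n) <= M.
Proof.
  intros H. apply is_lim_seq_Reals in H. apply cv_cvabs in H.
  assert (C := CV_Cauchy _ (exist _ _ H)). destruct (cauchy_bound _ C) as [M HM].
  exists M. intros n. apply HM. exists n. reflexivity.
Qed.

Lemma radius_ge (a : nat -> R) (r : R) :
  (forall h, Rabs h < r -> ex_pseries a h) -> Rbar_le r (CV_radius a).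
Proof.
  intros H.
  assert (Hx : forall x, 0 <= x < r -> Rbar_le x (CV_radius a)).
  { intros x Hx. destruct (CV_radius_bounded a) as [Hub _]. apply Hub.
    assert (Hs : ex_pseries a x) by (apply H; rewrite Rabs_right; lra).
    apply ex_series_lim_0 in Hs. apply lim0_bounded in Hs. destruct Hs as [M HM].
    exists M. intros n. specialize (HM n). rewrite pow_n_pow in HM.
    change (scal (x^n) (a n)) with (x^n * a n) in HM. rewrite Rmult_comm. exact HM. }
  destruct (Rle_or_lt r 0) as [Hr|Hr].
  { apply Rbar_le_trans with (Finite 0). simpl; lra. apply CV_radius_ge_0. }
  destruct (CV_radius a) as [rho| |] eqn:Erho; simpl; auto.
  - apply Rnot_lt_le. intros Hlt.
    assert (H0 := Hx 0 ltac:(lra)). simpl in H0.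
    assert (H1 := Hx ((rho + r)/2) ltac:(lra)). simpl in H1. lra.
  - specialize (Hx 0 ltac:(lra)). simpl in Hx. auto.
Qed.

Lemma radius_lt (a : nat -> R) (r h : R) :
  (forall h, Rabs h < r -> ex_pseries a h) -> Rabs h < r -> Rbar_lt (Rabs h) (CV_radius a).
Proof.
  intros H Hh. apply radius_ge in H.
  destruct (CV_radius a) as [rho| |]; simpl in *; lra.
Qed.

Lemma deriv_local (f : R -> R) (y r : R) (a : nat -> R) :
  0 < r -> (forall h, Rabs h < r -> ex_pseries a h) ->
  (forall h, Rabs h < r -> f (y + h) = PSeries a h) ->
  forall h, Rabs h < r -> is_derive f (y + h) (PSeries (PS_derive a) h).
Proof.
  intros Hr Hex Hf h Hh.
  assert (Hrad : Rbar_lt (Rabs h) (CV_radius a)) by (eapply radius_lt; eauto).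
  apply (is_derive_ext_loc (fun t => PSeries a (t - y))).
  - assert (Hd : 0 < r - Rabs h) by lra.
    exists (mkposreal _ Hd). intros t Ht. simpl in Ht.
    unfold ball in Ht; simpl in Ht; unfold AbsRing_ball in Ht; simpl in Ht.
    change (minus t (y + h)) with (t - (y + h)) in Ht.
    replace t with (y + (t - y)) at 2 by ring. symmetry. apply Hf.
    replace (t - y) with ((t - (y + h)) + h) by ring.
    apply Rle_lt_trans with (Rabs (t - (y + h)) + Rabs h). apply Rabs_triang. change (abs (t - (y + h))) with (Rabs (t - (y + h))) in Ht. lra.
  - eapply is_derive_eq.
    apply (is_derive_comp (PSeries a) (fun t => t - y) (y+h) (PSeries (PS_derive a) h) 1).
    + replace (y + h - y) with h by ring. apply is_derive_PSeries; auto.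
    + apply (is_derive_eq _ _ _ _ (is_derive_minus (fun t => t) (fun _ => y) (y+h) 1 0
            (is_derive_id _) (is_derive_const _ _))).
      change (minus 1 0) with (1 - 0). req. ring.
    + change (scal 1 ?x) with (1 * x). req. ring.
Qed.

Lemma cont_zero_right (g : R -> R) (d : R) :
  continuity_pt g 0 -> 0 < d -> (forall h, 0 < h < d -> g h = 0) -> g 0 = 0.
Proof.
  intros Hc Hd Hz. destruct (Req_dec (g 0) 0) as [E|E]; auto.
  exfalso. assert (He : 0 < Rabs (g 0)) by (apply Rabs_pos_lt; auto).
  destruct (Hc (Rabs (g 0)) He) as [al [Hal Hg]].
  set (h := Rmin (al/2) (d/2)).
  assert (Hh : 0 < h) by (apply Rmin_glb_lt; lra).
  assert (Hh1 : h <= al/2) by apply Rmin_l. assert (Hh2 : h <= d/2) by apply Rmin_r.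
  specialize (Hg h). simpl in Hg. unfold R_dist in Hg.
  rewrite Hz in Hg by lra. rewrite Rminus_0_r in Hg.
  assert (Rabs (0 - g 0) < Rabs (g 0)).
  { apply Hg. split. unfold D_x, no_cond. split; auto. lra. rewrite Rabs_right; lra. }
  rewrite Rminus_0_l, Rabs_Ropp in H. lra.
Qed.

Lemma pseries_zero_right (a : nat -> R) (r d : R) :
  0 < r -> 0 < d -> (forall h, Rabs h < r -> ex_pseries a h) ->
  (forall h, 0 < h < d -> PSeries a h = 0) -> forall n, a n = 0.
Proof.
  intros Hr Hd Hex Hz.
  assert (Hall : forall n, forall k, (k < n)%nat -> a k = 0).
  { induction n.
    - intros k Hk. lia.
    - intros k Hk. destruct (Nat.eq_dec k n) as [->|Hkn]; [|apply IHn; lia].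
      set (b := PS_decr_n a n).
      assert (Hexb : forall h, Rabs h < r -> ex_pseries b h).
      { intros h Hh. apply ex_pseries_decr_n; auto.
        destruct (Req_dec h 0) as [->|Hh0]. left; reflexivity.
        right. exists (/ h). change (mult (/h) h) with (/h * h). rewrite Rinv_l; auto. }
      assert (Hc : continuity_pt (PSeries b) 0).
      { apply PSeries_continuity. eapply radius_lt; eauto. rewrite Rabs_R0; auto. }
      assert (E := cont_zero_right (PSeries b) (Rmin r d) Hc ltac:(apply Rmin_glb_lt; lra)).
      rewrite PSeries_0 in E. unfold b, PS_decr_n in E. rewrite Nat.add_0_r in E. apply E.
      intros h Hh. assert (Hh1 : h < d) by (eapply Rlt_le_trans; [apply Hh| apply Rmin_r]).
      specialize (Hz h ltac:(lra)).
      rewrite (PSeries_decr_n_aux a n h IHn) in Hz.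
      apply Rmult_integral in Hz. destruct Hz as [Hz|Hz]; auto.
      exfalso. apply (pow_nonzero h n); auto. lra. }
  intros n. apply (Hall (S n)). lia.
Qed.

Lemma pseries_unique_loc (a : nat -> R) (x l : R) : is_pseries a x l -> PSeries a x = l.
Proof. apply is_pseries_unique. Qed.

Lemma identity_thm (D : R -> R) :
  (forall y, -1 < y < 1 -> D y = 0) ->
  (forall x0, x0 < 1 -> exists r, 0 < r /\ exists an : nat -> R,
      forall y, Rabs (y - x0) < r -> is_pseries an (y - x0) (D y)) ->
  forall y, y < 1 -> D y = 0.
Proof.
  intros H0 Hloc.
  assert (Hneg : forall y0, y0 <= 0 -> D y0 = 0).
  { intros y0 Hy0. destruct (Req_dec (D y0) 0) as [E|Hne]; auto. exfalso.
    set (E := fun M => 0 <= M /\ forall y, -M < y <= 0 -> D y = 0).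
    assert (Hb : bound E).
    { exists (- y0). intros M [HM HMy]. apply Rnot_lt_le. intros Hlt.
      apply Hne. apply HMy. lra. }
    assert (HE1 : E 1). { split. lra. intros y Hy. apply H0. lra. }
    destruct (completeness E Hb (ex_intro _ 1 HE1)) as [L [HLub HLlub]].
    assert (HL1 : 1 <= L) by (apply HLub; auto).
    assert (Hin : forall y, -L < y <= 0 -> D y = 0).
    { intros y Hy. destruct (classic (exists M, E M /\ -y < M)) as [[M [HM HMy]]|Hno].
      - apply (proj2 HM). lra.
      - exfalso. assert (L <= -y).
        { apply HLlub. intros M HM. apply Rnot_lt_le. intros Hlt. apply Hno. exists M. auto. }
        lra. }
    destruct (Hloc (-L) ltac:(lra)) as [r [Hr [an Han]]].
    assert (Hex : forall h, Rabs h < r -> ex_pseries an h).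
    { intros h Hh. assert (E1 := Han (-L + h)). replace (-L + h - - L) with h in E1 by ring.
      exists (D (-L + h)). apply E1. auto. }
    assert (Hz : forall n, an n = 0).
    { apply (pseries_zero_right an r (Rmin r L) Hr ltac:(apply Rmin_glb_lt; lra) Hex).
      intros h Hh. assert (h < r) by (eapply Rlt_le_trans; [apply Hh|apply Rmin_r || apply Rmin_l]).
      assert (h < L) by (eapply Rlt_le_trans; [apply Hh|apply Rmin_r]).
      assert (E1 := Han (-L + h)). replace (-L + h - - L) with h in E1 by ring.
      rewrite (is_pseries_unique _ _ _ (E1 ltac:(rewrite Rabs_right; lra))).
      apply Hin. lra. }
    assert (Hloc0 : forall h, Rabs h < r -> D (-L + h) = 0).
    { intros h Hh. assert (E1 := Han (-L + h)). replace (-L + h - - L) with h in E1 by ring.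
      rewrite <- (is_pseries_unique _ _ _ (E1 Hh)).
      rewrite (PSeries_ext an (fun _ => 0)) by auto. apply PSeries_const_0. }
    assert (HE2 : E (L + r/2)).
    { split. lra. intros y Hy. destruct (Rlt_or_le (-L) y).
      - apply Hin. lra.
      - replace y with (-L + (y + L)) by ring. apply Hloc0.
        rewrite Rabs_left1 by lra. lra. }
    assert (L + r/2 <= L) by (apply HLub; auto). lra. }
  intros y Hy. destruct (Rle_or_lt y 0). now apply Hneg. apply H0. lra.
Qed.

Definition Fo (x : R) : R := Iint x / mom 0.

Lemma mu_bound x0 s : x0 < 1 -> 0 <= s <= 1 -> Rmin 1 (1 - x0) <= 1 - x0 * s^3.
Proof.
  intros Hx Hs. assert (H3 := s3_bound s Hs).
  destruct (Rle_or_lt x0 0).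
  - apply Rle_trans with 1. apply Rmin_l. nra.
  - apply Rle_trans with (1 - x0). apply Rmin_r. nra.
Qed.

Lemma Fo_local x0 : x0 < 1 -> forall y, Rabs (y - x0) < Rmin 1 (1 - x0) / 2 ->
  is_pseries (cc x0) (y - x0) (Iint y).
Proof.
  intros Hx y Hy.
  assert (Hmu : 0 < Rmin 1 (1 - x0)) by (apply Rmin_glb_lt; lra).
  replace (Iint y) with (Iint (x0 + (y - x0))) by (f_equal; ring).
  apply (expand x0 (y - x0) (1/2) (Rmin 1 (1 - x0))); try lra.
  - intros s Hs. now apply mu_bound.
  - intros s Hs. assert (H3 := s3_bound s Hs). assert (H4 := mu_bound x0 s Hx Hs).
    assert (0 <= Rabs (y - x0)) by apply Rabs_pos. nra.
Qed.

Lemma cc0 k : cc 0 k = mom k.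
Proof.
  unfold cc, mom. apply RInt_ext. intros s _.
  replace (1 - 0 * s^3) with 1 by ring. rewrite pow1. req. field.
Qed.

Lemma Fo_series x : -1 < x < 1 -> Fo x = PSeries (hyp_coef 1 (1/3) (11/6)) x.
Proof.
  intros Hx. assert (H0 := mom0_pos).
  assert (E : is_pseries (cc 0) x (Iint (0 + x))).
  { apply (expand 0 x (Rabs x) 1); try lra.
    - split. apply Rabs_pos. apply Rabs_def1; lra.
    - intros s Hs. lra.
    - intros s Hs. assert (H3 := s3_bound s Hs). assert (0 <= Rabs x) by apply Rabs_pos. nra. }
  rewrite Rplus_0_l in E.
  rewrite (PSeries_ext _ (PS_scal (/ mom 0) (cc 0))).
  - rewrite PSeries_scal. rewrite (is_pseries_unique _ _ _ E). unfold Fo. field. lra.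
  - intros n. rewrite hyp_coef_mom. unfold PS_scal. rewrite cc0.
    change (scal (/ mom 0) (mom n)) with (/ mom 0 * mom n). field. lra.
Qed.

Lemma Fo_cont : is_2F1_continuation 1 (1/3) (11/6) Fo.
Proof.
  split.
  - intros x Hx. now apply Fo_series.
  - intros x0 Hx0. exists (Rmin 1 (1 - x0) / 2). split.
    { assert (0 < Rmin 1 (1 - x0)) by (apply Rmin_glb_lt; lra). lra. }
    exists (PS_scal (/ mom 0) (cc x0)). intros y Hy.
    assert (E := is_pseries_scal (/ mom 0) _ _ _ (Rmult_comm _ _) (Fo_local x0 Hx0 y Hy)).
    unfold Fo. change (scal (/ mom 0) (Iint y)) with (/ mom 0 * Iint y) in E.
    rewrite Rmult_comm in E. exact E.
Qed.

Definition FF : R -> R := hyp2F1 1 (1/3) (11/6).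

Lemma FF_spec : is_2F1_continuation 1 (1/3) (11/6) FF.
Proof.
  unfold FF, hyp2F1. apply epsilon_spec. exists Fo. apply Fo_cont.
Qed.

Lemma cont_unique (F G : R -> R) (a b c : R) :
  is_2F1_continuation a b c F -> is_2F1_continuation a b c G ->
  forall y, y < 1 -> F y = G y.
Proof.
  intros [F1 F2] [G1 G2] y Hy.
  apply Rminus_diag_uniq.
  apply (identity_thm (fun y => F y - G y)); auto.
  - intros z Hz. rewrite F1, G1 by auto. ring.
  - intros x0 Hx0. destruct (F2 x0 Hx0) as [r1 [Hr1 [a1 Ha1]]].
    destruct (G2 x0 Hx0) as [r2 [Hr2 [a2 Ha2]]].
    exists (Rmin r1 r2). split. apply Rmin_glb_lt; auto.
    exists (PS_minus a1 a2). intros z Hz.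
    assert (Hz1 : Rabs (z - x0) < r1) by (eapply Rlt_le_trans; [apply Hz|apply Rmin_l]).
    assert (Hz2 : Rabs (z - x0) < r2) by (eapply Rlt_le_trans; [apply Hz|apply Rmin_r]).
    apply (is_pseries_minus a1 a2 (z - x0) (F z) (G z) (Ha1 z Hz1) (Ha2 z Hz2)).
Qed.

Lemma FF_Fo y : y < 1 -> FF y = Fo y.
Proof. apply (cont_unique _ _ 1 (1/3) (11/6) FF_spec Fo_cont). Qed.


Ltac nz := let E := fresh in intro E; repeat (apply Rmult_integral in E; destruct E as [E|E]); lra.
Ltac sides Hn := repeat split; rewrite ?Hn; try nz; try lra.

Definition rad (y : R) : R := Rmin 1 (1 - y) / 2.

Lemma rad_pos y : y < 1 -> 0 < rad y.
Proof. intros. unfold rad. assert (0 < Rmin 1 (1 - y)) by (apply Rmin_glb_lt; lra). lra. Qed.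

Lemma rad_le y : y < 1 -> rad y <= (1 - y) / 2.
Proof. intros. unfold rad. assert (Rmin 1 (1 - y) <= 1 - y) by apply Rmin_r. lra. Qed.

Lemma Iint_loc y : y < 1 -> forall h, Rabs h < rad y -> is_pseries (cc y) h (Iint (y + h)).
Proof.
  intros Hy h Hh. assert (E := Fo_local y Hy (y + h)). replace (y + h - y) with h in E by ring.
  apply E. exact Hh.
Qed.

Lemma Iint_ex y : y < 1 -> forall h, Rabs h < rad y -> ex_pseries (cc y) h.
Proof. intros Hy h Hh. eexists. apply (Iint_loc y Hy h Hh). Qed.

Lemma Iint_eq y : y < 1 -> forall h, Rabs h < rad y -> Iint (y + h) = PSeries (cc y) h.
Proof. intros Hy h Hh. symmetry. apply is_pseries_unique. now apply Iint_loc. Qed.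

Lemma Iint_der_h y : y < 1 -> forall h, Rabs h < rad y ->
  is_derive Iint (y + h) (PSeries (PS_derive (cc y)) h).
Proof.
  intros Hy. apply deriv_local. now apply rad_pos. now apply Iint_ex. now apply Iint_eq.
Qed.

Lemma Iint_der y : y < 1 -> is_derive Iint y (cc y 1).
Proof.
  intros Hy. assert (E := Iint_der_h y Hy 0 ltac:(rewrite Rabs_R0; now apply rad_pos)).
  rewrite Rplus_0_r, PSeries_0 in E. unfold PS_derive in E.
  replace (INR 1 * cc y 1) with (cc y 1) in E by (simpl; ring). exact E.
Qed.

Lemma cc1_der y : y < 1 -> is_derive (fun x => cc x 1) y (2 * cc y 2).
Proof.
  intros Hy. assert (Hr := rad_pos y Hy). assert (Hr2 := rad_le y Hy).
  assert (Hex : forall h, Rabs h < rad y -> ex_pseries (PS_derive (cc y)) h).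
  { intros h Hh. apply ex_pseries_derive. eapply radius_lt; [|apply Hh]. now apply Iint_ex. }
  assert (Heq : forall h, Rabs h < rad y -> cc (y + h) 1 = PSeries (PS_derive (cc y)) h).
  { intros h Hh. assert (y + h < 1).
    { apply Rabs_def2 in Hh. lra. }
    assert (D1 := Iint_der (y + h) H). assert (D2 := Iint_der_h y Hy h Hh).
    apply is_derive_unique in D1. apply is_derive_unique in D2. congruence. }
  assert (E := deriv_local (fun x => cc x 1) y (rad y) (PS_derive (cc y)) Hr Hex Heq 0
                 ltac:(rewrite Rabs_R0; lra)).
  rewrite Rplus_0_r, PSeries_0 in E. unfold PS_derive in E.
  replace (INR 1 * (INR 2 * cc y 2)) with (2 * cc y 2) in E by (simpl; ring). exact E.
Qed.

Lemma RInt_lin3 (f g k : R -> R) (a b A B C If Ig Ik : R) :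
  is_RInt f a b If -> is_RInt g a b Ig -> is_RInt k a b Ik ->
  is_RInt (fun s => A * f s + B * g s + C * k s) a b (A * If + B * Ig + C * Ik).
Proof.
  intros Hf Hg Hk.
  apply (is_RInt_plus (fun s => A * f s + B * g s) (fun s => C * k s)).
  apply (is_RInt_plus (fun s => A * f s) (fun s => B * g s)).
  apply (is_RInt_scal f a b A If Hf).
  apply (is_RInt_scal g a b B Ig Hg).
  apply (is_RInt_scal k a b C Ik Hk).
Qed.

Lemma exRI' (R0 : R -> R) :
  (forall s, 0 <= s <= 1 -> ex_derive R0 s) -> is_RInt (fun s => R0 s * phi s) 0 1 (RInt (fun s => R0 s * phi s) 0 1).
Proof. intros. apply (RInt_correct (V:=R_CompleteNormedModule)). now apply exRI. Qed.

Lemma Iint_ode y : y < 1 ->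
  y * (1 - y) * (2 * cc y 2) + (11/6 - 7/3 * y) * cc y 1 - Iint y / 3 = 0.
Proof.
  intros Hy.
  assert (HD : forall s, 0 <= s <= 1 -> 0 < 1 - y * s^3).
  { intros s Hs. assert (H := mu_bound y s Hy Hs).
    assert (0 < Rmin 1 (1 - y)) by (apply Rmin_glb_lt; lra). lra. }
  assert (Hnorm : forall s, 1 + - (y * (s * (s * (s * 1)))) = 1 - y * s^3) by (intros; simpl; ring).
  assert (H1 := ibp (fun s => s / (1 - y * s^3)^2)
                    (fun s => / (1 - y * s^3)^2 + 6 * y * s^3 / (1 - y * s^3)^3)).
  assert (I2 : is_RInt (fun s => s^(3*2) / (1 - y * s^3)^(S 2) * phi s) 0 1 (cc y 2)).
  { apply exRI'. intros s Hs. specialize (HD s Hs). auto_derive. sides Hnorm. }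
  assert (I1 : is_RInt (fun s => s^(3*1) / (1 - y * s^3)^(S 1) * phi s) 0 1 (cc y 1)).
  { apply exRI'. intros s Hs. specialize (HD s Hs). auto_derive. sides Hnorm. }
  assert (I0 : is_RInt (fun s => / (1 - y * s^3) * phi s) 0 1 (Iint y)).
  { apply exRI'. intros s Hs. specialize (HD s Hs). auto_derive. sides Hnorm. }
  assert (H3 := RInt_lin3 _ _ _ 0 1 (2 * (y * (1 - y))) (11/6 - 7/3 * y) (-(1/3)) _ _ _ I2 I1 I0).
  assert (Hd1 : forall s, 0 <= s <= 1 -> is_derive (fun s0 : R => s0 / (1 - y * s0 ^ 3) ^ 2) s
     (/ (1 - y * s ^ 3) ^ 2 + 6 * y * s ^ 3 / (1 - y * s ^ 3) ^ 3)).
  { intros s Hs. specialize (HD s Hs). auto_derive. sides Hnorm.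
    rewrite Hnorm. simpl pow. req. field. lra. }
  assert (Hc1 : forall s, 0 <= s <= 1 -> continuous
     (fun s0 : R => / (1 - y * s0 ^ 3) ^ 2 + 6 * y * s0 ^ 3 / (1 - y * s0 ^ 3) ^ 3) s).
  { intros s Hs. specialize (HD s Hs). apply cont_der. auto_derive. sides Hnorm. }
  specialize (H1 Hd1 Hc1).
  assert (E : 2 * (y * (1 - y)) * cc y 2 + (11 / 6 - 7 / 3 * y) * cc y 1 + - (1 / 3) * Iint y
              = -(1/3) * (- (0 / (1 - y * 0^3)^2))).
  { eapply is_RInt_uniq; [| apply H3 | apply (is_RInt_scal _ _ _ (-(1/3)) _ H1)].
    intros s Hs. rewrite Rmin_left, Rmax_right in Hs by lra.
    assert (Hd := HD s ltac:(lra)). change (scal ?a ?b) with (a * b).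
    cbv beta. simpl pow. req. field. lra. }
  replace (- (0 / (1 - y * 0 ^ 3) ^ 2)) with 0 in E by (simpl; field).
  lra.
Qed.

Definition F1 (y : R) : R := cc y 1 / mom 0.
Definition F2 (y : R) : R := 2 * cc y 2 / mom 0.

Lemma FF_der y : y < 1 -> is_derive FF y (F1 y).
Proof.
  intros Hy. assert (H0 := mom0_pos).
  apply (is_derive_ext_loc Fo).
  - assert (Hd : 0 < 1 - y) by lra. exists (mkposreal _ Hd). intros t Ht.
    simpl in Ht. unfold ball in Ht; simpl in Ht; unfold AbsRing_ball in Ht; simpl in Ht.
    change (abs (minus t y)) with (Rabs (t - y)) in Ht.
    symmetry. apply FF_Fo. apply Rabs_def2 in Ht. lra.
  - unfold Fo, F1. apply (is_derive_eq _ _ _ _ (is_derive_scal_l Iint y (cc y 1) (/ mom 0) (Iint_der y Hy))).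
    change (scal (cc y 1) (/ mom 0)) with (cc y 1 * / mom 0). req. unfold Rdiv. ring.
Qed.

Lemma F1_der y : y < 1 -> is_derive F1 y (F2 y).
Proof.
  intros Hy. unfold F1, F2.
  apply (is_derive_eq _ _ _ _ (is_derive_scal_l (fun x => cc x 1) y (2 * cc y 2) (/ mom 0) (cc1_der y Hy))).
  change (scal (2 * cc y 2) (/ mom 0)) with (2 * cc y 2 * / mom 0). req. unfold Rdiv. ring.
Qed.

Lemma FF_ode y : y < 1 -> y * (1 - y) * F2 y + (11/6 - 7/3 * y) * F1 y - FF y / 3 = 0.
Proof.
  intros Hy. assert (H0 := mom0_pos). rewrite FF_Fo by auto. unfold F1, F2, Fo.
  assert (E := Iint_ode y Hy).
  replace (y * (1 - y) * (2 * cc y 2 / mom 0) + (11 / 6 - 7 / 3 * y) * (cc y 1 / mom 0) - Iint y / mom 0 / 3)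
    with ((y * (1 - y) * (2 * cc y 2) + (11 / 6 - 7 / 3 * y) * cc y 1 - Iint y / 3) / mom 0) by (field; lra).
  rewrite E. unfold Rdiv. ring.
Qed.

Lemma FF0 : FF 0 = 1.
Proof.
  destruct FF_spec as [H1 _]. rewrite H1 by lra. rewrite PSeries_0.
  unfold hyp_coef. simpl. field.
Qed.


Definition odeE (alpha y d dd z : R) : R :=
  (1 + z) ^ 2 * dd
  + / 2 * (1 + z) * ((alpha * (1 + z) ^ 3 - 2) / (alpha * (1 + z) ^ 3 + 1)) * d
  - / 2 * ((3 * alpha * (1 + z) ^ 3) / (alpha * (1 + z) ^ 3 + 1)) * y.

Section Alpha.
Variable alpha : R.
Hypothesis Ha : 0 < alpha.

Definition del1 (z : R) : R := sqrt (1 + alpha * (1 + z)^3).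
Definition dl1 (z : R) : R := 3/2 * alpha * (1 + z)^2 / sqrt (1 + alpha * (1 + z)^3).
Definition ddl1 (z : R) : R :=
  3 * alpha * (1 + z) / sqrt (1 + alpha * (1 + z)^3)
  - 9/4 * alpha^2 * (1 + z)^4 / (sqrt (1 + alpha * (1 + z)^3) * sqrt (1 + alpha * (1 + z)^3) * sqrt (1 + alpha * (1 + z)^3)).

Lemma u3_pos z : -1 < z -> 0 < alpha * (1 + z)^3.
Proof. intros. apply Rmult_lt_0_compat; auto. apply pow_lt. lra. Qed.

Lemma A_pos z : -1 < z -> 0 < 1 + alpha * (1 + z)^3.
Proof. intros. assert (H1 := u3_pos z H). lra. Qed.

Lemma cube z : (1 + z) * ((1 + z) * ((1 + z) * 1)) = (1 + z)^3.
Proof. ring. Qed.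

Lemma del1_der z : -1 < z -> is_derive del1 z (dl1 z).
Proof.
  intros Hz. assert (HA := A_pos z Hz). assert (HS := sqrt_lt_R0 _ HA).
  unfold del1, dl1. auto_derive.
  - rewrite cube. lra.
  - rewrite cube. set (S := sqrt (1 + alpha * (1 + z)^3)) in *. req. field. lra.
Qed.

Lemma dl1_der z : -1 < z -> is_derive dl1 z (ddl1 z).
Proof.
  intros Hz. assert (HA := A_pos z Hz). assert (HS := sqrt_lt_R0 _ HA).
  unfold dl1, ddl1. auto_derive.
  - rewrite cube. split. lra. split; [lra| auto].
  - rewrite cube. set (S := sqrt (1 + alpha * (1 + z)^3)) in *. req. field. lra.
Qed.

Lemma del1_ode z : -1 < z -> odeE alpha (del1 z) (dl1 z) (ddl1 z) z = 0.
Proof.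
  intros Hz. assert (HA := A_pos z Hz). assert (HS := sqrt_lt_R0 _ HA).
  assert (HSS := sqrt_sqrt _ (Rlt_le _ _ HA)).
  unfold odeE, del1, dl1, ddl1. set (S := sqrt (1 + alpha * (1 + z)^3)) in *. clearbody S.
  assert (Hal : alpha = (S * S - 1) / (1 + z)^3).
  { rewrite HSS. field. lra. }
  assert (Hu : (1 + z)^3 <> 0) by (apply pow_nonzero; lra).
  assert (HS2 : S * S <> 0) by nra.
  rewrite Hal. field. repeat split; try lra.
Qed.

Definition tt (z : R) : R := - / (alpha * (1 + z)^3).
Definition del2 (z : R) : R := / (1 + z) * FF (tt z).
Definition dl2 (z : R) : R := (-3 * tt z * F1 (tt z) - FF (tt z)) / (1 + z)^2.
Definition ddl2 (z : R) : R :=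
  (9 * tt z ^ 2 * F2 (tt z) + 18 * tt z * F1 (tt z) + 2 * FF (tt z)) / (1 + z)^3.

Lemma tt_neg z : -1 < z -> tt z < 0.
Proof.
  intros Hz. unfold tt. assert (H := u3_pos z Hz).
  assert (0 < / (alpha * (1 + z)^3)) by (apply Rinv_0_lt_compat; auto). lra.
Qed.

Lemma Derive_FF t : t < 1 -> Derive (fun x => FF x) t = F1 t.
Proof. intros. apply is_derive_unique. now apply FF_der. Qed.
Lemma Derive_F1 t : t < 1 -> Derive (fun x => F1 x) t = F2 t.
Proof. intros. apply is_derive_unique. now apply F1_der. Qed.
Lemma ex_FF t : t < 1 -> ex_derive (fun x => FF x) t.
Proof. intros. eexists. now apply FF_der. Qed.
Lemma ex_F1 t : t < 1 -> ex_derive (fun x => F1 x) t.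
Proof. intros. eexists. now apply F1_der. Qed.

Lemma tt_der z : -1 < z -> is_derive tt z (3 / (alpha * (1 + z)^4)).
Proof.
  intros Hz. assert (H3 := u3_pos z Hz). unfold tt. auto_derive.
  - rewrite cube. lra.
  - rewrite cube. req. field. lra.
Qed.
Lemma Derive_tt z : -1 < z -> Derive (fun x => tt x) z = 3 / (alpha * (1 + z)^4).
Proof. intros. apply is_derive_unique. now apply tt_der. Qed.
Lemma ex_tt z : -1 < z -> ex_derive (fun x => tt x) z.
Proof. intros. eexists. now apply tt_der. Qed.

Ltac dsides Hz := repeat split; try (apply ex_FF; lra); try (apply ex_F1; lra);
   try (apply ex_tt; lra); try nz; try lra.

Lemma del2_der z : -1 < z -> is_derive del2 z (dl2 z).
Proof.
  intros Hz. assert (H3 := u3_pos z Hz). assert (Ht := tt_neg z Hz).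
  unfold del2, dl2. auto_derive.
  - dsides Hz.
  - rewrite Derive_tt, Derive_FF by lra. unfold tt. req. field. lra.
Qed.

Lemma dl2_der z : -1 < z -> is_derive dl2 z (ddl2 z).
Proof.
  intros Hz. assert (H3 := u3_pos z Hz). assert (Ht := tt_neg z Hz).
  unfold dl2, ddl2. auto_derive.
  - dsides Hz.
  - rewrite Derive_tt, Derive_FF, Derive_F1 by lra. unfold tt. req. field. lra.
Qed.

Lemma del2_ode z : -1 < z -> odeE alpha (del2 z) (dl2 z) (ddl2 z) z = 0.
Proof.
  intros Hz. assert (H3 := u3_pos z Hz). assert (Ht := tt_neg z Hz).
  assert (E := FF_ode (tt z) ltac:(lra)).
  assert (E2 : F2 (tt z) = (FF (tt z) / 3 - (11/6 - 7/3 * tt z) * F1 (tt z)) / (tt z * (1 - tt z))).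
  { assert (Hnz : tt z * (1 - tt z) <> 0) by (apply Rmult_integral_contrapositive_currified; lra).
    replace (F2 (tt z)) with ((tt z * (1 - tt z) * F2 (tt z)) / (tt z * (1 - tt z))) by (field; repeat split; lra).
    f_equal. lra. }
  unfold odeE, del2, dl2, ddl2. rewrite E2.
  unfold tt. field. repeat split; try lra.
Qed.

End Alpha.


Lemma const_deriv (g : R -> R) :
  (forall z, -1 < z -> is_derive g z 0) -> forall z, -1 < z -> g z = g 0.
Proof.
  intros Hg z Hz.
  destruct (MVT_gen g 0 z (fun _ => 0)) as [c [Hc E]].
  - intros x Hx. apply Hg. destruct Hx as [Hx1 _].
    assert (Rmin 0 z > -1) by (unfold Rmin; destruct Rle_dec; lra). lra.
  - intros x Hx. apply continuity_pt_filterlim. apply cont_der. eexists. apply Hg.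
    destruct Hx as [Hx1 _]. assert (Rmin 0 z > -1) by (unfold Rmin; destruct Rle_dec; lra). lra.
  - lra.
Qed.

Section Alpha2.
Variable alpha : R.
Hypothesis Ha : 0 < alpha.

Definition W (y d : R -> R) (z : R) : R :=
  ((1 + alpha * (1 + z)^3) * d z - 3/2 * alpha * (1 + z)^2 * y z) / (1 + z).

Lemma W_der (y d dd : R -> R) z : -1 < z -> is_derive y z (d z) -> is_derive d z (dd z) ->
  odeE alpha (y z) (d z) (dd z) z = 0 -> is_derive (W y d) z 0.
Proof.
  intros Hz Hy Hd Ho. unfold W. auto_derive.
  - repeat split; try (eexists; eassumption); try lra.
  - replace (Derive (fun x : R => y x) z) with (d z) by (symmetry; apply is_derive_unique; exact Hy).
    replace (Derive (fun x : R => d x) z) with (dd z) by (symmetry; apply is_derive_unique; exact Hd).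
    assert (HA := A_pos alpha Ha z Hz).
    apply eq_trans with ((1 + alpha * (1 + z)^3) / (1 + z)^3 * odeE alpha (y z) (d z) (dd z) z).
    + unfold odeE. req. field. lra.
    + rewrite Ho. ring.
Qed.

Lemma W_zero (v dv : R -> R) :
  (forall z, -1 < z -> is_derive v z (dv z)) ->
  (forall z, -1 < z -> W v dv z = 0) ->
  forall z, -1 < z -> v z = v 0 / del1 alpha 0 * del1 alpha z.
Proof.
  intros Hv HW.
  assert (Hg : forall z, -1 < z -> is_derive (fun z => v z / del1 alpha z) z 0).
  { intros z Hz. assert (HA := A_pos alpha Ha z Hz). assert (HS := sqrt_lt_R0 _ HA).
    assert (HSS := sqrt_sqrt _ (Rlt_le _ _ HA)).
    specialize (HW z Hz). unfold W in HW.
    assert (Hdv : dv z = 3/2 * alpha * (1 + z)^2 * v z / (1 + alpha * (1 + z)^3)).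
    { apply Rmult_eq_reg_l with (1 + alpha * (1 + z)^3). 2: lra.
      assert (Hu : 1 + z <> 0) by lra.
      apply Rminus_diag_uniq. unfold Rdiv in HW.
      apply Rmult_eq_reg_r with (/ (1 + z)). 2: now apply Rinv_neq_0_compat.
      rewrite Rmult_0_l. rewrite <- HW. field. lra. }
    unfold del1. auto_derive.
    - repeat split; try (eexists; now apply Hv); rewrite ?cube; lra.
    - replace (Derive (fun x : R => v x) z) with (dv z) by (symmetry; apply is_derive_unique; now apply Hv). rewrite Hdv. rewrite cube.
      set (S := sqrt (1 + alpha * (1 + z)^3)) in *. clearbody S.
      assert (Hal : alpha = (S * S - 1) / (1 + z)^3) by (rewrite HSS; field; lra).
      assert (HS2 : S * S <> 0) by nra.
      req. rewrite Hal. field. repeat split; try lra. }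
  intros z Hz. assert (E := const_deriv _ Hg z Hz). simpl in E.
  assert (HA := A_pos alpha Ha z Hz). assert (HS := sqrt_lt_R0 _ HA).
  unfold del1 in *. rewrite <- E. field. lra.
Qed.
End Alpha2.

Section Alpha3.
Variable alpha : R.
Hypothesis Ha : 0 < alpha.

Lemma not_prop :
  ~ (forall z, -1 < z -> del2 alpha z = del2 alpha 0 / del1 alpha 0 * del1 alpha z).
Proof.
  intros Hk. set (k := del2 alpha 0 / del1 alpha 0) in *.
  assert (Hc : continuity_pt FF 0).
  { apply continuity_pt_filterlim. apply cont_der. eexists. apply FF_der. lra. }
  destruct (Hc (1/2) ltac:(lra)) as [dl [Hdl Hcl]].
  assert (Hclose : forall t, -dl < t < 0 -> 1/2 < FF t < 3/2).
  { intros t Ht. assert (Hd := Hcl t). simpl in Hd. unfold R_dist in Hd. rewrite FF0 in Hd.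
    assert (Rabs (FF t - 1) < 1/2).
    { apply Hd. split. unfold D_x, no_cond. split; auto. lra. rewrite Rminus_0_r, Rabs_left; lra. }
    apply Rabs_def2 in H. lra. }
  set (u1 := 1 + 1 / (alpha * dl)).
  assert (Hu1 : 1 < u1).
  { unfold u1. assert (0 < 1 / (alpha * dl)) by (apply Rdiv_lt_0_compat; [lra|nra]). lra. }
  assert (Htt : forall u, u1 <= u -> -dl < tt alpha (u - 1) < 0).
  { intros u Hu. unfold tt. replace (1 + (u - 1)) with u by ring.
    assert (Hu3 : u <= u^3).
    { assert (1 <= u^2) by nra. nra. }
    assert (Hau : alpha * u1 <= alpha * u^3) by nra.
    assert (Hau1 : alpha * u1 = alpha + 1 / dl).
    { unfold u1. field. split; lra. }
    assert (0 < alpha * u^3) by nra.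
    split.
    - apply Ropp_lt_contravar. apply Rmult_lt_reg_r with (alpha * u^3). auto.
      rewrite Rinv_l by lra.
      assert (1 / dl * dl = 1) by (field; lra).
      assert (dl * (alpha + 1 / dl) <= dl * (alpha * u^3)) by (apply Rmult_le_compat_l; lra).
      nra.
    - assert (0 < / (alpha * u^3)) by (apply Rinv_0_lt_compat; auto). lra. }
  set (u2 := 5 * u1).
  assert (E1 := Hk (u1 - 1) ltac:(lra)). assert (E2 := Hk (u2 - 1) ltac:(unfold u2; lra)).
  assert (F1c := Hclose _ (Htt u1 ltac:(lra))). assert (F2c := Hclose _ (Htt u2 ltac:(unfold u2; lra))).
  unfold del2, del1 in E1, E2. replace (1 + (u1 - 1)) with u1 in E1 by ring.
  replace (1 + (u2 - 1)) with u2 in E2 by ring.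
  set (S1 := sqrt (1 + alpha * u1 ^ 3)) in *. set (S2 := sqrt (1 + alpha * u2 ^ 3)) in *.
  assert (HS1 : 0 < S1) by (apply sqrt_lt_R0; assert (0 < u1^3) by (apply pow_lt; lra); nra).
  assert (HS12 : S1 <= S2).
  { apply sqrt_le_1_alt. unfold u2. assert (u1^3 <= (5*u1)^3) by (apply pow_incr; lra). nra. }
  set (a1 := FF (tt alpha (u1 - 1))) in *. set (a2 := FF (tt alpha (u2 - 1))) in *.
  assert (Ek1 : k * S1 * u1 = a1) by (rewrite <- E1; field; lra).
  assert (Ek2 : k * S2 * u2 = a2) by (rewrite <- E2; unfold u2; field; lra).
  unfold u2 in Ek2.
  assert (0 < k) by nra.
  assert (k * S1 * u1 <= k * S2 * u1) by (apply Rmult_le_compat_r; [lra|]; apply Rmult_le_compat_l; lra).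
  nra.
Qed.
End Alpha3.


Lemma gs_eq alpha k1 k2 z :
  general_sol alpha k1 k2 z = k1 * del1 alpha z + k2 * del2 alpha z.
Proof. unfold general_sol, del1, del2, FF, tt. ring. Qed.

Lemma lin_der (f g : R -> R) (a b z df dg : R) :
  is_derive f z df -> is_derive g z dg ->
  is_derive (fun x => a * f x + b * g x) z (a * df + b * dg).
Proof.
  intros Hf Hg.
  apply (is_derive_eq _ _ _ _ (is_derive_plus (fun x => a * f x) (fun x => b * g x) z (a * df) (b * dg)
     (is_derive_scal f z a df Hf) (is_derive_scal g z b dg Hg))).
  reflexivity.
Qed.

Theorem mainTheorem10 (alpha : R) (Halpha : 0 < alpha) :
  (forall k1 k2 : R, is_ode_solution alpha (general_sol alpha k1 k2)) /\
  (forall delta : R -> R, is_ode_solution alpha delta ->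
     exists k1 k2 : R, forall z, -1 < z -> delta z = general_sol alpha k1 k2 z).
Proof.
  split.
  - intros k1 k2.
    exists (fun z => k1 * dl1 alpha z + k2 * dl2 alpha z),
           (fun z => k1 * ddl1 alpha z + k2 * ddl2 alpha z).
    intros z Hz. split; [|split].
    + apply (is_derive_ext (fun x => k1 * del1 alpha x + k2 * del2 alpha x)).
      { intros t. now rewrite gs_eq. }
      apply lin_der. now apply del1_der. now apply del2_der.
    + apply lin_der. now apply dl1_der. now apply dl2_der.
    + change (odeE alpha (general_sol alpha k1 k2 z) (k1 * dl1 alpha z + k2 * dl2 alpha z)
               (k1 * ddl1 alpha z + k2 * ddl2 alpha z) z = 0).
      rewrite gs_eq.
      replace (odeE alpha (k1 * del1 alpha z + k2 * del2 alpha z) (k1 * dl1 alpha z + k2 * dl2 alpha z)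
               (k1 * ddl1 alpha z + k2 * ddl2 alpha z) z)
        with (k1 * odeE alpha (del1 alpha z) (dl1 alpha z) (ddl1 alpha z) z
              + k2 * odeE alpha (del2 alpha z) (dl2 alpha z) (ddl2 alpha z) z)
        by (unfold odeE; ring).
      rewrite del1_ode, del2_ode by auto. ring.
  - intros delta [e1 [e2 H]].
    set (C := W alpha delta e1 0). set (C2 := W alpha (del2 alpha) (dl2 alpha) 0).
    assert (HW1 : forall z, -1 < z -> W alpha delta e1 z = C).
    { apply const_deriv. intros z Hz. destruct (H z Hz) as [Hd [Hd1 Ho]].
      apply (W_der alpha Halpha delta e1 e2 z Hz Hd Hd1 Ho). }
    assert (HW2 : forall z, -1 < z -> W alpha (del2 alpha) (dl2 alpha) z = C2).
    { apply const_deriv. intros z Hz.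
      apply (W_der alpha Halpha _ _ (ddl2 alpha) z Hz).
      now apply del2_der. now apply dl2_der. now apply del2_ode. }
    assert (HC2 : C2 <> 0).
    { intros E. apply (not_prop alpha Halpha).
      apply (W_zero alpha Halpha (del2 alpha) (dl2 alpha)).
      - intros z Hz. now apply del2_der.
      - intros z Hz. rewrite HW2; auto. }
    set (k2 := C / C2).
    set (v := fun z => delta z - k2 * del2 alpha z).
    set (dv := fun z => e1 z - k2 * dl2 alpha z).
    assert (Hv : forall z, -1 < z -> is_derive v z (dv z)).
    { intros z Hz. unfold v, dv.
      apply (is_derive_ext (fun x => 1 * delta x + - k2 * del2 alpha x)).
      { intros; req; ring. }
      apply (is_derive_eq _ _ _ _ (lin_der delta (del2 alpha) 1 (-k2) z (e1 z) (dl2 alpha z)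
               (proj1 (H z Hz)) (del2_der alpha Halpha z Hz))).
      req; ring. }
    assert (HWv : forall z, -1 < z -> W alpha v dv z = 0).
    { intros z Hz. replace (W alpha v dv z) with (W alpha delta e1 z - k2 * W alpha (del2 alpha) (dl2 alpha) z).
      - rewrite HW1, HW2 by auto. unfold k2. field. auto.
      - unfold W, v, dv. field. lra. }
    assert (Hprop := W_zero alpha Halpha v dv Hv HWv).
    exists (v 0 / del1 alpha 0), k2. intros z Hz.
    rewrite gs_eq. rewrite <- Hprop by auto. unfold v. ring.
Qed.
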